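(* Let $\Gamma$ be a countably infinite residually finite group and $\{\Gamma_n\}_{n\in\mathbb N}$ a strictly decreasing sequence of finite-index normal subgroups with $\bigcap_n\Gamma_n=\{e_\Gamma\}$ and $[\Gamma_n:\Gamma_{n+1}]>2$ for all $n$. Let $X=\varprojlim\Gamma/\Gamma_n$ with the left translation action of $\Gamma$ and quotient maps $\pi_n:X\to\Gamma/\Gamma_n$. For $n\ge2$ choose $\gamma_n\in\Gamma_{n-1}\setminus\Gamma_n$, let $C_n=\pi_n^{-1}(\gamma_n\Gamma_n)$, $X_+=\bigcup_{n\ge2}C_n$, $X_-=X\setminus(X_+\cup\{e_\Gamma\})$, and define $f:X\setminus\{e_\Gamma\}\to\{1,-1\}$ by $f=1$ on $X_+$ and $f=-1$ on $X_-$. Then the McMahon extension action $\Gamma\curvearrowright X_f$ associated to $(X, e_\Gamma, f)$ is null.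
   Context: $X=\varprojlim\Gamma/\Gamma_n$ is the compact metrizable group of compatible sequences in $\prod_n\Gamma/\Gamma_n$; $\Gamma$ embeds densely and acts minimally and freely by left translation. Under the hypotheses, $f$ is continuous and cannot be extended continuously to $X$. McMahon extension: the (unique up to conjugacy) minimal continuous action $\Gamma\curvearrowright X_f$ on a compact metrizable space with a $\Gamma$-equivariant continuous surjection $\pi_f:X_f\to X$ such that $\pi_f^{-1}(x)$ is one point for $x\notin\Gamma e_\Gamma$ and two points for $x\in\Gamma e_\Gamma$, and $f\circ\pi_f$ on $X_f\setminus\pi_f^{-1}(e_\Gamma)$ extends continuously to $X_f$. Null: for every sequence $\{s_n\}$ in $\Gamma$ and finite open cover $\mathcal U$, $\limsup_n\frac1n\log N(\bigvee_{i=1}^n s_i^{-1}\mathcal U)=0$, $N$ the minimal subcover size. *)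

(* Defs.v *)
From HB Require Import structures.
From mathcomp Require Import all_boot all_order all_algebra.
From mathcomp Require Import monoid.
From mathcomp Require Import all_classical all_reals all_analysis.

Set Implicit Arguments.
Unset Strict Implicit.
Unset Printing Implicit Defensive.

Import Order.TTheory GRing.Theory Num.Theory.
Local Open Scope classical_set_scope.

Section GroupDefs.
Variable G : groupType.
Local Open Scope group_scope.

Definition is_subgroup (H : set G) : Prop :=
  H 1 /\ (forall x y, H x -> H y -> H (x * y^-1)).

Definition is_normal_subgroup (H : set G) : Prop :=
  is_subgroup H /\ (forall g h, H h -> H (g^-1 * h * g)).

Definition lcoset (g : G) (H : set G) : set G := (fun h => g * h) @` H.

Definition finite_index (H : set G) : Prop :=
  exists s : seq G, forall g, exists2 r, r \in s & H (r^-1 * g).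

(* [H : K] > 2 (for K a subgroup of H): H contains three elements lying
   in pairwise distinct left cosets of K *)
Definition index_gt2 (H K : set G) : Prop :=
  exists a b c, [/\ H a, H b, H c &
    [/\ ~ K (a^-1 * b), ~ K (a^-1 * c) & ~ K (b^-1 * c)]].

(* A point of X is a compatible sequence of cosets: x k is a left coset
   of Gam k and x (k+1) is contained in x k. *)
Definition Xpoint (Gam : nat -> set G) (x : nat -> set G) : Prop :=
  (forall k, exists g, x k = lcoset g (Gam k)) /\
  (forall k, x k.+1 `<=` x k).

Definition Xe (Gam : nat -> set G) : nat -> set G := Gam.

Definition Xact (g : G) (x : nat -> set G) : nat -> set G :=
  fun k => lcoset g (x k).

(* X_+ : union of the cylinders C_n = pi_n^{-1}(gamma_n Gamma_n), n >= 2 *)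
Definition Xplus (Gam : nat -> set G) (gam : nat -> G) (x : nat -> set G)
  : Prop := exists2 k, (1 <= k)%N & x k = lcoset (gam k) (Gam k).

End GroupDefs.

Definition fsign (R : realType) (G : groupType) (Gam : nat -> set G)
  (gam : nat -> G) (x : nat -> set G) : R :=
  if `[< Xplus Gam gam x >] then 1%R else (-1)%R.

Section Covers.
Variable Y : Type.

Definition mem_union (V : seq (set Y)) (y : Y) : Prop :=
  exists2 i, (i < size V)%N & nth set0 V i y.

Definition is_cover (V : seq (set Y)) : Prop := forall y, mem_union V y.

Definition subcover_of_size (V : seq (set Y)) (m : nat) : bool :=
  `[< exists I : seq nat, [/\ size I = m,
        (forall i, i \in I -> (i < size V)%N) &
        (forall y, mem_union V y -> exists2 i, i \in I & nth set0 V i y)] >].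

Lemma subcover_exists (V : seq (set Y)) : exists m, subcover_of_size V m.
Proof.
exists (size V); apply/asboolP; exists (iota 0 (size V)); split.
- by rewrite size_iota.
- by move=> i; rewrite mem_iota.
- by move=> y [i Hi Hy]; exists i => //; rewrite mem_iota.
Qed.

Definition Ncover (V : seq (set Y)) : nat := ex_minn (subcover_exists V).

Definition join2 (V W : seq (set Y)) : seq (set Y) :=
  [seq A `&` B | A <- V, B <- W].

End Covers.

Section Null.
Variables (R : realType) (G : groupType) (Y : topologicalType).
Local Open Scope group_scope.

Definition join_pullbacks (T : G -> Y -> Y) (s : nat -> G)
  (U : seq (set Y)) (n : nat) : seq (set Y) :=
  foldr (fun i acc => join2 [seq T (s i) @^-1` A | A <- U] acc)
        [:: setT] (iota 1 n).

Definition is_null_action (T : G -> Y -> Y) : Prop :=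
  forall (s : nat -> G) (U : seq (set Y)),
    (forall i, (i < size U)%N -> open (nth set0 U i)) ->
    is_cover U ->
    limn_esup (fun n => ((ln (Ncover (join_pullbacks T s U n))%:R
                           / n%:R)%R)%:E : \bar R) = 0%E.

Definition is_continuous_action (T : G -> Y -> Y) : Prop :=
  [/\ forall y, T 1 y = y,
      forall g h y, T (g * h) y = T g (T h y) &
      forall g, continuous (T g)].

Definition is_minimal_action (T : G -> Y -> Y) : Prop :=
  forall y, closure (range (fun g => T g y)) = [set: Y].

End Null.

(* Main.v *)
Require Import Defs.
From HB Require Import structures.
From mathcomp Require Import all_boot all_order all_algebra.
From mathcomp Require Import monoid.
From mathcomp Require Import all_classical all_reals all_analysis.
From mathcomp Require Import finmap zify lra.
Import Order.TTheory GRing.Theory Num.Theory numFieldNormedType.Exports.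
Local Open Scope classical_set_scope.

Section PartA.
Variable Y : Type.

Lemma join2_nth (V W : seq (set Y)) i j : (i < size V)%N -> (j < size W)%N ->
  exists2 t, (t < size (join2 V W))%N &
    nth set0 (join2 V W) t = nth set0 V i `&` nth set0 W j.
Proof.
elim: V i => [|a V IH] [|i] //= hi hj; rewrite /join2 /=.
- exists j; first by rewrite size_cat size_map ltn_addr.
  by rewrite nth_cat size_map hj (nth_map set0).
- have [t ht e] := IH i hi hj.
  exists (size W + t)%N; first by rewrite size_cat size_map ltn_add2l.
  by rewrite nth_cat size_map ltnNge leq_addr /= addKn.
Qed.

Lemma foldr_join_sub (G : Type) (T : G -> Y -> Y) (s : nat -> G)
  (U : seq (set Y)) (W : set Y) (l : seq nat) :
  (forall i, i \in l -> exists2 j, (j < size U)%N & W `<=` T (s i) @^-1` nth set0 U j) ->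
  exists2 t, (t < size (foldr (fun i acc => join2 [seq T (s i) @^-1` A | A <- U] acc)
        [:: setT] l))%N &
    W `<=` nth set0 (foldr (fun i acc => join2 [seq T (s i) @^-1` A | A <- U] acc)
        [:: setT] l) t.
Proof.
elim: l => [|i l IH] H /=; first by exists 0%N.
have [t ht Wt] := IH (fun k kl => H k (@mem_behead _ (i :: l) _ kl)).
have [j hj Wj] := H i (mem_head _ _).
have hj' : (j < size [seq T (s i) @^-1` A | A <- U])%N by rewrite size_map.
have [t' ht' e] := join2_nth _ _ _ _ hj' ht.
exists t' => //; rewrite e (nth_map set0) //.
by move=> y Wy; split; [exact: Wj|exact: Wt].
Qed.

End PartA.
Section PartA2.
Variable Y : choiceType.
Lemma Ncover_le (ys : seq Y) (atom : Y -> set Y) (V : seq (set Y)) :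
  (forall y, exists y0, y0 \in ys /\ atom y0 y) ->
  (forall y0, exists2 t, (t < size V)%N & atom y0 `<=` nth set0 V t) ->
  (Ncover V <= size ys)%N.
Proof.
move=> cov sub.
have [f hf] := @choice Y nat (fun y0 t => (t < size V)%N /\ atom y0 `<=` nth set0 V t)
  (fun y0 => let: ex_intro2 t h1 h2 := sub y0 in ex_intro _ t (conj h1 h2)).
rewrite /Ncover; case: ex_minnP => m _ hmin; apply: hmin.
apply/asboolP; exists (map f ys); split.
- by rewrite size_map.
- by move=> i /mapP [y0 _ ->]; exact: (hf y0).1.
- move=> y _; have [y0 [iny0 ay]] := cov y.
  exists (f y0); last by apply: (hf y0).2.
  by apply/mapP; exists y0.
Qed.

End PartA2.

Lemma reps_exist (Y : choiceType) (K : finType) (Rel : Y -> K -> Prop)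
  (same : Y -> Y -> Prop) :
  (forall y, exists k, Rel y k) ->
  (forall y y' k, Rel y k -> Rel y' k -> same y y') ->
  exists ys : seq Y, (size ys <= #|K|)%N /\
    forall y, exists y0, y0 \in ys /\ same y0 y.
Proof.
move=> tot uniq.
pose rep (k : K) : option Y :=
  match pselect (exists y, Rel y k) with
  | left P => Some (proj1_sig (cid P))
  | right _ => None end.
exists (pmap rep (enum K)); split.
  by rewrite size_pmap cardE count_size.
move=> y; have [k hk] := tot y.
have P : exists y, Rel y k by exists y.
exists (proj1_sig (cid P)); split.
  rewrite mem_pmap; apply/mapP; exists k; first by rewrite mem_enum.
  rewrite /rep; case: pselect => [P'|//]; congr Some.
  by rewrite (Prop_irrelevance P' P).
apply: (uniq _ _ k) => //; exact: (proj2_sig (cid P)).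
Qed.

Lemma null_from_poly (R : realType) (a : nat -> nat) (A : nat) :
  (forall n, (a n <= A * n.+1 ^ 3)%N) ->
  limn_esup (fun n => ((ln (a n)%:R / n%:R)%R)%:E : \bar R) = 0%E.
Proof.
move=> aA; apply: (cvg_limn_einf_sup _).2.
apply: cvg_EFin; first exact: nearW.
apply/cvgrPdist_le => e e0 /=.
have e4 : (0 < e ^+ 4)%R by rewrite exprn_gt0.
near=> n.
have n1 : (1 <= n)%N by near: n; exact: nbhs_infty_ge.
have nbig : ((192 * A)%:R / e ^+ 4 <= n%:R :> R)%R by near: n; exact: nbhs_infty_ger.
have n0 : (0 < n%:R :> R)%R by rewrite ltr0n.
have lnge0 : (0 <= ln (a n)%:R :> R)%R.
  have [->|an] := eqVneq (a n) 0%N; first by rewrite ln0.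
  by apply: ln_ge0; rewrite ler1n lt0n.
rewrite sub0r normrN ger0_norm ?divr_ge0 // ?ler0n //.
rewrite ler_pdivrMr //.
have [->|an] := eqVneq (a n) 0%N; first by rewrite ln0 ?mulr_ge0 // ltW.
have apos : (0 < (a n)%:R :> R)%R by rewrite ltr0n lt0n.
rewrite -[X in (_ <= X)%R]expRK ler_ln ?posrE ?expR_gt0 //.
have h1 : ((a n)%:R <= A%:R * 8 * n%:R ^+ 3 :> R)%R.
  have : (a n <= A * 8 * n ^ 3)%N.
    apply: (leq_trans (aA n)); rewrite -mulnA leq_mul2l; apply/orP; right.
    have -> : (8 = 2 ^ 3)%N by [].
    by rewrite -expnMn leq_exp2r //; lia.
  by move=> h; rewrite -natrX -!natrM ler_nat.
apply: (le_trans h1).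
apply: (le_trans _ (expR_ge1Dxn 3 _)); last by rewrite mulr_ge0 // ltW.
have h2 : (192 * A%:R <= e ^+ 4 * n%:R :> R)%R.
  by rewrite -ler_pdivrMl // mulrC -(natrM R 192 A).
have h3 : (0 <= n%:R ^+ 3 :> R)%R by rewrite exprn_ge0 // ler0n.
rewrite exprMn.
have -> : ((3.+1)`!%:R = 24 :> R)%R by [].
have -> : (n%:R ^+ 4 = n%:R * n%:R ^+ 3 :> R)%R by rewrite exprS.
have h4 : (0 <= n%:R :> R)%R by rewrite ler0n.
have h5 : (0 <= A%:R :> R)%R by rewrite ler0n.
nra.
Unshelve. all: by end_near.
Qed.

Lemma m1n1 (R : realType) : (-1 : R)%R <> 1%R.
Proof. lra. Qed.

Lemma pm_close (R : realType) (a b : R) : (a = 1 \/ a = -1)%R -> (b = 1 \/ b = -1)%R ->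
  (`|a - b| < 1)%R -> a = b.
Proof.
case=> -> [] -> // h; exfalso; move: h.
  by rewrite opprK ger0_norm; lra.
by rewrite ler0_norm; lra.
Qed.

Lemma inord_inj_le B x x' : (x <= B)%N -> (x' <= B)%N ->
  (inord x : 'I_B.+1) = inord x' -> x = x'.
Proof. by move=> hx hx' /(congr1 (@nat_of_ord _)); rewrite !inordK. Qed.

Lemma index_inord_inj (T : eqType) (s : seq T) B x x' : x \in s -> x' \in s ->
  (size s <= B)%N -> (inord (index x s) : 'I_B.+1) = inord (index x' s) -> x = x'.
Proof.
move=> hx hx' hs e.
have e' : index x s = index x' s.
  apply: (@inord_inj_le B _ _ _ _ e).
    by apply: leq_trans (ltnW _) hs; rewrite index_mem.
  by apply: leq_trans (ltnW _) hs; rewrite index_mem.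
by rewrite -(nth_index x hx) e' (nth_index x hx').
Qed.

Lemma inord_bool_inj B (b b' : bool) : (inord b : 'I_B.+2) = inord b' -> b = b'.
Proof.
move=> e; have := @inord_inj_le B.+1 b b' _ _ e; case: b e; case: b' => //= _ h; by have := h isT isT.
Qed.


Set Implicit Arguments.
Unset Strict Implicit.
Unset Printing Implicit Defensive.

Section GroupPart.
Variable G : groupType.
Local Open Scope group_scope.
Variable Gam : nat -> set G.
Variable gam : nat -> G.
Hypothesis Hnorm : forall k, is_normal_subgroup (Gam k).
Hypothesis Hdec : forall k, Gam k.+1 `<=` Gam k.
Hypothesis Hgam : forall k, (1 <= k)%N -> Gam k.-1 (gam k) /\ ~ Gam k (gam k).

Lemma sg1 k : Gam k 1.
Proof. by case: (Hnorm k) => [[]]. Qed.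

Lemma sgV k x : Gam k x -> Gam k x^-1.
Proof. by move=> h; have := (Hnorm k).1.2 _ _ (sg1 k) h; rewrite mul1g. Qed.

Lemma sgM k x y : Gam k x -> Gam k y -> Gam k (x * y).
Proof. by move=> hx /(sgV) hy; have := (Hnorm k).1.2 _ _ hx hy; rewrite invgK. Qed.

Lemma sgJ k g h : Gam k h -> Gam k (g^-1 * h * g).
Proof. exact: (Hnorm k).2. Qed.

Lemma sgdec j k : (j <= k)%N -> Gam k `<=` Gam j.
Proof.
elim: k => [|k IH]; first by rewrite leqn0 => /eqP ->.
rewrite leq_eqVlt => /orP [/eqP -> //|]; rewrite ltnS => /IH h x /Hdec; exact: h.
Qed.

Lemma lcosetP k g x : lcoset g (Gam k) x <-> Gam k (g^-1 * x).
Proof.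
split; first by case=> h hh <-; rewrite mulKg.
by move=> h; exists (g^-1 * x) => //; rewrite mulVKg.
Qed.

Lemma lcoset_eq k a b : lcoset a (Gam k) = lcoset b (Gam k) <-> Gam k (a^-1 * b).
Proof.
split.
  move=> e; have : lcoset a (Gam k) b by rewrite e; apply/lcosetP; rewrite mulVg; exact: sg1.
  by move/lcosetP.
move=> h; rewrite eqEsubset; split=> x /lcosetP hx; apply/lcosetP.
  by have := sgM (sgV h) hx; rewrite invgM invgK -mulgA mulVKg.
by have := sgM h hx; rewrite -mulgA mulVKg.
Qed.

Lemma lcosetM (H : set G) g a : lcoset g (lcoset a H) = lcoset (g * a) H.
Proof.
rewrite eqEsubset; split=> x.
  by case=> _ [h hh <-] <-; exists h => //; rewrite mulgA.
by case=> h hh <-; exists (a * h); [exists h|rewrite mulgA].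
Qed.


Definition nested (a : nat -> G) := forall j k, (j <= k)%N -> Gam j ((a j)^-1 * a k).

Lemma Xpoint_rep x : Xpoint Gam x ->
  exists a : nat -> G, (forall k, x k = lcoset (a k) (Gam k)) /\ nested a.
Proof.
case=> hx hn; have [a ha] := choice hx; exists a; split => // j k.
elim: k => [|k IH]; first by rewrite leqn0 => /eqP ->; rewrite mulVg; exact: sg1.
rewrite leq_eqVlt => /orP [/eqP ->|]; first by rewrite mulVg; exact: sg1.
rewrite ltnS => jk.
have hs : Gam k ((a k)^-1 * a k.+1).
  have : x k.+1 (a k.+1) by rewrite ha; apply/lcosetP; rewrite mulVg; exact: sg1.
  by move/hn; rewrite ha => /lcosetP.
have := sgM (IH jk) (sgdec jk hs).
by rewrite -mulgA mulVKg.
Qed.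

Definition Wit g (a : nat -> G) j := (1 <= j)%N /\ Gam j ((g * a j)^-1 * gam j).

Lemma Xplus_Xact x a g : (forall k, x k = lcoset (a k) (Gam k)) ->
  (Xplus Gam gam (Xact g x) <-> exists j, Wit g a j).
Proof.
move=> ha; split.
  by case=> k k1; rewrite /Xact ha lcosetM => /lcoset_eq h; exists k.
by case=> k [k1 h]; exists k => //; rewrite /Xact ha lcosetM; apply/lcoset_eq.
Qed.

Lemma wit_uniq a g j j' : nested a -> Wit g a j -> Wit g a j' -> j = j'.
Proof.
move=> na.
wlog: j j' / (j <= j')%N.
  by move=> H w w'; case: (leqP j j') => h; [exact: H|symmetry; apply: H => //; exact: ltnW].
rewrite leq_eqVlt => /orP [/eqP //|jj' [j1 h1] [j'1 h2]].
exfalso; apply: (Hgam j1).2.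
have j'pos : (j <= j'.-1)%N by rewrite -ltnS prednK // (leq_trans j1 (ltnW jj')).
have g' : Gam j (gam j') by apply: (sgdec j'pos); exact: (Hgam j'1).1.
have h2' : Gam j ((g * a j')^-1 * gam j') by apply: (sgdec (ltnW jj')).
have hu : Gam j ((g * a j)^-1).
  have e : (g * a j)^-1 = ((a j)^-1 * a j') * (((g * a j')^-1 * gam j') * (gam j')^-1).
    by rewrite !invgM -!mulgA mulgV mulg1 mulVKg.
  by rewrite e; apply: sgM; [exact: na (ltnW jj')|apply: sgM => //; exact: sgV].
have := sgM (sgV hu) h1.
by rewrite invgK mulVKg.
Qed.


Lemma wit_max (S : seq G) a : nested a ->
  (exists g, g \in S /\ exists j, Wit g a j) ->
  exists g0 K, [/\ g0 \in S, Wit g0 a K &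
     forall g j, g \in S -> Wit g a j -> (j <= K)%N].
Proof.
move=> na; elim: S => [|g S IH]; first by case=> g1 [].
case=> g1 [ing1 [j1 w1]].
case: (pselect (exists g, g \in S /\ exists j, Wit g a j)) => [hS|hS].
  have [g0 [K [in0 w0 mx]]] := IH hS.
  case: (pselect (exists j, Wit g a j)) => [[jg wg]|ng].
    case: (leqP jg K) => hjK.
      exists g0, K; split; [by rewrite in_cons in0 orbT|exact: w0|].
      move=> g' j; rewrite in_cons => /orP [/eqP -> w|h w]; last exact: mx w.
      by rewrite (wit_uniq na w wg).
    exists g, jg; split; [exact: mem_head|by []|].
    move=> g' j; rewrite in_cons => /orP [/eqP -> w|h w].
      by rewrite (wit_uniq na w wg).
    exact: (leq_trans (mx _ _ h w) (ltnW hjK)).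
  exists g0, K; split; [by rewrite in_cons in0 orbT|exact: w0|].
  move=> g' j; rewrite in_cons => /orP [/eqP -> w|h w]; last exact: mx w.
  by exfalso; apply: ng; exists j.
have eg : g1 = g.
  move: ing1; rewrite in_cons => /orP [/eqP //|h].
  by exfalso; apply: hS; exists g1; split => //; exists j1.
subst g1; exists g, j1; split; [exact: mem_head|by []|].
move=> g' j; rewrite in_cons => /orP [/eqP -> w|h w].
  by rewrite (wit_uniq na w w1).
by exfalso; apply: hS; exists g'; split => //; exists j.
Qed.

Definition PatA g0 K g := Gam K (g0 * g^-1).
Definition PatB g0 K g := exists j, [/\ (1 <= j)%N, (j < K)%N & Gam j ((gam j)^-1 * g * g0^-1)].

Lemma pattern a g0 K g : nested a -> Wit g0 a K -> (forall j, Wit g a j -> (j <= K)%N) ->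
  ((exists j, Wit g a j) <-> PatA g0 K g \/ PatB g0 K g).
Proof.
move=> na [K1 h0] mx.
have aj0 : forall j, (j < K)%N -> Gam j ((a j)^-1 * g0^-1).
  move=> j jK.
  have e : (a j)^-1 * g0^-1 = ((a j)^-1 * a K) * (((g0 * a K)^-1 * gam K) * (gam K)^-1).
    by rewrite !invgM -!mulgA mulgV mulg1 mulVKg.
  rewrite e; apply: sgM; first exact: na (ltnW jK).
  have jK' : (j <= K.-1)%N by rewrite -ltnS prednK.
  apply: sgM; first exact: (sgdec (ltnW jK)).
  by apply: sgV; apply: (sgdec jK'); exact: (Hgam K1).1.
split.
  case=> j [j1 hj]; have := mx j (conj j1 hj); rewrite leq_eqVlt => /orP [/eqP ejK|jK].
    subst j; left; rewrite /PatA.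
    have := sgM (sgV h0) hj.
    rewrite !invgM !invgK -!mulgA mulVKg => /(sgJ (gam K)^-1); rewrite invgK.
    by rewrite mulVKg mulgA mulgK.
  right; exists j; split => //.
  have := sgM (sgV (aj0 j jK)) hj.
  rewrite !invgM !invgK -!mulgA mulVKg => /sgV.
  by rewrite !invgM !invgK !mulgA.
case=> [hA|[j [j1 jK hB]]].
  exists K; split => //.
  have := sgM h0 (sgJ (gam K) hA).
  by rewrite !invgM -!mulgA mulVKg mulKg.
exists j; split => //.
have := sgM (aj0 j jK) (sgV hB).
by rewrite !invgM !invgK -!mulgA ?mulVKg ?mulKg.
Qed.


Lemma PatA_mono g0 K K' g : (K <= K')%N -> PatA g0 K' g -> PatA g0 K g.
Proof. by move=> h; apply: sgdec. Qed.

Lemma PatB_mono g0 K K' g : (K <= K')%N -> PatB g0 K g -> PatB g0 K' g.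
Proof. by move=> h [j [j1 jK hj]]; exists j; split => //; exact: leq_trans jK h. Qed.



Lemma asbool_PatA g0 K K' g : (K <= K')%N -> `[< PatA g0 K' g >] -> `[< PatA g0 K g >].
Proof. by move=> h /asboolP hh; apply/asboolP; exact: PatA_mono hh. Qed.

Lemma asbool_PatB g0 K K' g : (K <= K')%N -> `[< PatB g0 K g >] -> `[< PatB g0 K' g >].
Proof. by move=> h /asboolP hh; apply/asboolP; exact: PatB_mono hh. Qed.

Lemma count_mono_eq (T : eqType) (p q : pred T) (s : seq T) :
  (forall x, x \in s -> p x -> q x) ->
  (count p s <= count q s)%N /\ (count p s = count q s -> forall x, x \in s -> p x = q x).
Proof.
elim: s => [|y s IH] H /=; first by split.
have H' : forall x, x \in s -> p x -> q x by move=> x xs; apply: H; rewrite in_cons xs orbT.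
have [le1 eq1] := IH H'.
have hy := H y (mem_head _ _).
case hp: (p y); case hq: (q y) => /=.
- split; first by move: le1; lia.
  move=> e0; have e : count p s = count q s by move: e0; lia.
  move=> x; rewrite in_cons => /orP [/eqP ->|xs].
    by rewrite hp hq.
  exact: eq1.
- by move: (hy hp); rewrite hq.
- split; first by move: le1; lia.
  by move=> e; exfalso; move: le1 e; lia.
- split; first by move: le1; lia.
  move=> e x; rewrite in_cons => /orP [/eqP ->|xs]; first by rewrite hp hq.
  by apply: eq1 => //; move: e; lia.
Qed.

Lemma key_pattern (S : seq G) a a' g0 K K' :
  nested a -> nested a' -> Wit g0 a K -> Wit g0 a' K' ->
  (forall g j, g \in S -> Wit g a j -> (j <= K)%N) ->
  (forall g j, g \in S -> Wit g a' j -> (j <= K')%N) ->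
  count (fun g => `[< PatA g0 K g >]) S = count (fun g => `[< PatA g0 K' g >]) S ->
  count (fun g => `[< PatB g0 K g >]) S = count (fun g => `[< PatB g0 K' g >]) S ->
  forall g, g \in S -> ((exists j, Wit g a j) <-> (exists j, Wit g a' j)).
Proof.
move=> na na' w w' mx mx'.
wlog: a a' K K' na na' w w' mx mx' / (K <= K')%N.
  move=> H cA cB g gS; case: (leqP K K') => h.
    exact: (H a a' K K' na na' w w' mx mx' h cA cB g gS).
  by symmetry; exact: (H a' a K' K na' na w' w mx' mx (ltnW h) (esym cA) (esym cB) g gS).
move=> KK' cA cB g gS.
have eA : `[< PatA g0 K' g >] = `[< PatA g0 K g >].
  have [_ h] := @count_mono_eq _ (fun g => `[< PatA g0 K' g >]) (fun g => `[< PatA g0 K g >]) S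
    (fun x _ hx => asbool_PatA KK' hx).
  exact: h (esym cA) _ gS.
have eB : `[< PatB g0 K g >] = `[< PatB g0 K' g >].
  have [_ h] := @count_mono_eq _ (fun g => `[< PatB g0 K g >]) (fun g => `[< PatB g0 K' g >]) S
    (fun x _ hx => asbool_PatB KK' hx).
  exact: h cB _ gS.
rewrite (pattern na w (fun j => mx g j gS)) (pattern na' w' (fun j => mx' g j gS)).
split=> [[hA|hB]|[hA|hB]].
- by left; apply/asboolP; rewrite eA; apply/asboolP.
- by right; apply/asboolP; rewrite -eB; apply/asboolP.
- by left; apply/asboolP; rewrite -eA; apply/asboolP.
- by right; apply/asboolP; rewrite eB; apply/asboolP.
Qed.

End GroupPart.

Definition palias (Y : topologicalType) (y0 : Y) : Type := Y.
HB.instance Definition _ (Y : topologicalType) (y0 : Y) := Topological.copy (@palias Y y0) Y.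
HB.instance Definition _ (Y : topologicalType) (y0 : Y) := isPointed.Build (@palias Y y0) y0.
Lemma cover_compact_of (Y : topologicalType) (y0 : Y) (A : set Y) :
  compact A -> cover_compact A.
Proof.
move=> cA; have : @compact (@palias Y y0) A by [].
by rewrite compact_cover.
Qed.

Section TopPart.
Variable Y : topologicalType.
Variable I : choiceType.
Variable agree : I -> Y -> Y -> Prop.
Hypothesis agree_refl : forall i y, agree i y y.
Hypothesis agree_sym : forall i y y', agree i y y' -> agree i y' y.
Hypothesis agree_trans : forall i y y' y'', agree i y y' -> agree i y' y'' -> agree i y y''.
Hypothesis agree_loc : forall i y, \forall w \near y, agree i y w.
Hypothesis agree_sep : forall y y', y <> y' -> exists i, ~ agree i y y'.

Lemma atom_nbhs (D : seq I) y : \forall w \near y, forall i, i \in D -> agree i y w.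
Proof.
elim: D => [|d D IH]; first by apply: nearW => w i; rewrite in_nil.
near=> w => i; rewrite in_cons => /orP [/eqP ->|iD].
  by near: w; exact: agree_loc.
by move: i iD; near: w; exact: IH.
Unshelve. all: by end_near.
Qed.

Lemma nagree_open i y : open [set w | ~ agree i y w].
Proof.
rewrite openE => w /= nw; rewrite /interior.
near=> w' => a; apply: nw; apply: (agree_trans a); apply: agree_sym.
by near: w'; exact: agree_loc.
Unshelve. all: by end_near.
Qed.

Lemma stage1 (A : set Y) y : compact [set: Y] -> open A -> A y ->
  exists D : seq I, forall y', (forall i, i \in D -> agree i y y') -> A y'.
Proof.
move=> cY oA Ay.
have cC : compact (~` A).
  by apply: (subclosed_compact _ cY) => //; exact: open_closedC.
have {}cC : cover_compact (~` A) := cover_compact_of y cC.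
have hc : ~` A `<=` cover [set: I] (fun i => [set w | ~ agree i y w]).
  move=> w nAw; have wy : y <> w by move=> e; apply: nAw; rewrite -e.
  by have [i ni] := agree_sep wy; exists i.
have [D' _ hcov] := cC I [set: I] (fun i => [set w | ~ agree i y w])
  (fun i _ => nagree_open i y) hc.
exists (D' : seq I) => y' hy'; apply: contrapT => nAy'.
have [i Di ni] := hcov y' nAy'; apply: ni; apply: hy'; exact: Di.
Qed.

Lemma stage2 (y00 : Y) (U : seq (set Y)) : compact [set: Y] ->
  (forall i, (i < size U)%N -> open (nth set0 U i)) -> is_cover U ->
  exists D : seq I, forall y, exists2 j, (j < size U)%N &
     forall y', (forall i, i \in D -> agree i y y') -> nth set0 U j y'.
Proof.
move=> cY oU cU.
have h1 : forall y, exists p : nat * seq I, (p.1 < size U)%N /\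
     forall y', (forall i, i \in p.2 -> agree i y y') -> nth set0 U p.1 y'.
  move=> y; have [j jU Uy] := cU y; have [D hD] := stage1 cY (oU j jU) Uy.
  by exists (j, D).
have [f hf] := choice h1.
have cY' : cover_compact [set: Y] := cover_compact_of y00 cY.
have ho : forall y, [set: Y] y -> open [set w | forall i, i \in (f y).2 -> agree i y w].
  move=> y _; rewrite openE => w /= hw; rewrite /interior.
  have := atom_nbhs (f y).2 w; apply: filterS => w' hw' i iD.
  exact: agree_trans (hw i iD) (hw' i iD).
have hc : [set: Y] `<=` cover [set: Y] (fun y => [set w | forall i, i \in (f y).2 -> agree i y w]).
  by move=> w _; exists w => //= i _; exact: agree_refl.
have [D'' _ hcov] := cY' Y [set: Y] (fun y => [set w | forall i, i \in (f y).2 -> agree i y w]) ho hc.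
- exists (flatten [seq (f y).2 | y <- (D'' : seq Y)]) => w.
  have [y0 Dy0 wy0] := hcov w Logic.I.
  exists (f y0).1; first exact: (hf y0).1.
  move=> y' hy'; apply: (hf y0).2 => i iD.
  apply: (agree_trans (wy0 i iD)); apply: hy'.
  by apply/flattenP; exists (f y0).2 => //; apply/mapP; exists y0.
Qed.

End TopPart.

Section Misc.
Variable G : groupType.
Local Open Scope group_scope.

Lemma lcoset1 (H : set G) : lcoset 1 H = H.
Proof.
rewrite eqEsubset; split=> x; first by case=> h hh <-; rewrite mul1g.
by move=> hx; exists x => //; rewrite mul1g.
Qed.

Lemma Xact_comp g h (x : nat -> set G) : Xact g (Xact h x) = Xact (g * h) x.
Proof. by apply: funext => k; rewrite /Xact lcosetM. Qed.

Lemma Xact1 (x : nat -> set G) : Xact 1 x = x.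
Proof. by apply: funext => k; rewrite /Xact lcoset1. Qed.

Variable Gam : nat -> set G.
Hypothesis Hnorm : forall k, is_normal_subgroup (Gam k).
Hypothesis Hdec : forall k, Gam k.+1 `<=` Gam k.

Lemma Xe_point : Xpoint Gam (Xe Gam).
Proof. by split => k; [exists 1; rewrite lcoset1|exact: Hdec]. Qed.

Lemma level_down (x x' : nat -> set G) m k : Xpoint Gam x -> Xpoint Gam x' ->
  x m = x' m -> (k <= m)%N -> x k = x' k.
Proof.
move=> /(Xpoint_rep Hnorm Hdec) [a [ha na]] /(Xpoint_rep Hnorm Hdec) [a' [ha' na']].
rewrite ha ha' => /(lcoset_eq Hnorm) e km; rewrite ha ha'; apply/(lcoset_eq Hnorm).
have := sgM Hnorm (sgM Hnorm (na k m km) (sgdec Hdec km e)) (sgV Hnorm (na' k m km)).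
by rewrite !invgM !invgK -!mulgA !mulVKg.
Qed.

Lemma lcoset_Gam k g : Gam k g -> lcoset g (Gam k) = Gam k.
Proof.
by move=> h; rewrite -{2}(lcoset1 (Gam k)); apply/(lcoset_eq Hnorm); rewrite mulg1; exact (sgV Hnorm h).
Qed.

Lemma third_coset K c : index_gt2 (Gam K) (Gam K.+1) ->
  exists d, [/\ Gam K d, ~ Gam K.+1 d & ~ Gam K.+1 (c^-1 * d)].
Proof.
case=> a [b [e [ha hb he [nab nae nbe]]]].
have same : forall x y, (Gam K.+1 x /\ Gam K.+1 y) \/ (Gam K.+1 (c^-1 * x) /\ Gam K.+1 (c^-1 * y)) ->
    Gam K.+1 (x^-1 * y).
  move=> x y [[hx hy]|[hx hy]].
    exact (sgM Hnorm (sgV Hnorm hx) hy).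
  by have := sgM Hnorm (sgV Hnorm hx) hy; rewrite invgM invgK -mulgA mulVKg.
apply: contrapT => hn.
have cl : forall x, Gam K x -> Gam K.+1 x \/ Gam K.+1 (c^-1 * x).
  move=> x hx; apply: contrapT => hh; apply: hn; exists x; split => //.
    by move=> h; apply: hh; left.
  by move=> h; apply: hh; right.
case: (cl a ha) => hA; case: (cl b hb) => hB; case: (cl e he) => hE.
- by apply: nab; apply: same; left.
- by apply: nab; apply: same; left.
- by apply: nae; apply: same; left.
- by apply: nbe; apply: same; right.
- by apply: nbe; apply: same; left.
- by apply: nae; apply: same; right.
- by apply: nab; apply: same; right.
- by apply: nab; apply: same; right.
Qed.

End Misc.

Lemma cluster_seq (Y : topologicalType) (u : nat -> Y) : compact [set: Y] ->
  exists w : Y, forall A B, (\forall K \near \oo, A (u K)) -> nbhs w B -> A `&` B !=set0.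
Proof.
move=> cY.
have PF : ProperFilter (u @ \oo) by apply: fmap_proper_filter.
have hT : (u @ \oo) [set: Y] by apply: filterT.
have [w [_ hw]] := cY (u @ \oo) PF hT.
by exists w => A B hA hB; apply: hw.
Qed.

Unset Implicit Arguments.

Theorem theorem4p3 (R : realType) (G : groupType)
  (Gam : nat -> set G) (gam : nat -> G) :
  countable [set: G] ->
  infinite_set [set: G] ->
  (forall k, is_normal_subgroup (Gam k) /\ finite_index (Gam k)) ->
  (forall k, Gam k.+1 `<` Gam k) ->
  \bigcap_k Gam k = [set 1%g] ->
  (forall k, index_gt2 (Gam k) (Gam k.+1)) ->
  (forall k, (1 <= k)%N -> Gam k.-1 (gam k) /\ ~ Gam k (gam k)) ->
  forall (Y : pseudoMetricType R) (T : G -> Y -> Y)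
         (pi : Y -> nat -> set G),
    hausdorff_space Y -> compact [set: Y] ->
    is_continuous_action T -> is_minimal_action T ->
    (* pi is a continuous G-equivariant surjection onto X *)
    (forall y, Xpoint Gam (pi y)) ->
    (forall k y, \forall y' \near y, pi y' k = pi y k) ->
    (forall g y, pi (T g y) = Xact g (pi y)) ->
    (forall x, Xpoint Gam x -> exists y, pi y = x) ->
    (* fibres: two points over the orbit of e, one point elsewhere *)
    (forall x, Xpoint Gam x -> (exists g, x = Xact g (Xe Gam)) ->
       exists y1 y2, y1 <> y2 /\ pi @^-1` [set x] = [set y1; y2]) ->
    (forall x, Xpoint Gam x -> ~ (exists g, x = Xact g (Xe Gam)) ->
       exists y, pi @^-1` [set x] = [set y]) ->
    (* f o pi on Y \ pi^-1(e) extends continuously to Y *)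
    (exists F : Y -> R, continuous F /\
       forall y, pi y <> Xe Gam -> F y = fsign R Gam gam (pi y)) ->
    is_null_action R T.
Proof.
move=> _ _ Hsub Hdecs _ Hidx Hgam Y T pi _ cY [T1 TM Tc] _ Hxp Hloc Heq _ Hfib2 Hfib1 [F [Fc HF]].
have Hnorm k : is_normal_subgroup (Gam k) := (Hsub k).1.
have Hdec k : Gam k.+1 `<=` Gam k := properW (Hdecs k).
have Tinv g y : T g^-1%g (T g y) = y by rewrite -TM mulVg T1.
have Tinv' g y : T g (T g^-1%g y) = y by rewrite -TM mulgV T1.
have Tinj g : injective (T g) by move=> y y' e; rewrite -(Tinv g y) e Tinv.
have Xe_ok := Xe_point Hdec.
have [z1 [z2 [z12 fib]]] := Hfib2 (Xe Gam) Xe_ok (ex_intro _ 1%g (esym (Xact1 _))).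
have fibE y : pi y = Xe Gam <-> y = z1 \/ y = z2.
  by have := congr1 (fun A => A y) fib => /= ->.
have piz1 : pi z1 = Xe Gam by apply/fibE; left.
have fsign_pm x : fsign R Gam gam x = 1%R \/ fsign R Gam gam x = (-1)%R.
  by rewrite /fsign; case: asboolP => _; [left|right].
(* the sequences approaching e from X_+ and X_- *)
have up_lev K k : (k <= K)%N -> pi (T (gam K.+1) z1) k = Gam k.
  move=> kK; rewrite Heq piz1 /Xact /Xe; apply: (lcoset_Gam Hnorm).
  by apply: (sgdec Hdec kK); exact: (Hgam K.+1 isT).1.
have up_F K : F (T (gam K.+1) z1) = 1%R.
  have nX : pi (T (gam K.+1) z1) <> Xe Gam.
    move=> e; apply: (Hgam K.+1 isT).2.
    have := congr1 (fun x => x K.+1) e; rewrite Heq piz1 /Xact /Xe => e'.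
    have : lcoset (gam K.+1) (Gam K.+1) (gam K.+1) by apply/lcosetP; rewrite mulVg; exact: sg1 Hnorm _.
    by rewrite e'.
  rewrite HF // /fsign; case: asboolP => // nX'; exfalso; apply: nX'.
  by exists K.+1 => //; rewrite Heq piz1.
have [b hb] := choice (fun K => @third_coset _ _ Hnorm K (gam K.+1) (Hidx K)).
have dn_lev K k : (k <= K)%N -> pi (T (b K) z1) k = Gam k.
  move=> kK; rewrite Heq piz1 /Xact /Xe; apply: (lcoset_Gam Hnorm).
  by apply: (sgdec Hdec kK); case: (hb K).
have dn_F K : F (T (b K) z1) = (-1)%R.
  have [hb1 hb2 hb3] := hb K.
  have nX : pi (T (b K) z1) <> Xe Gam.
    move=> e; apply: hb2.
    have := congr1 (fun x => x K.+1) e; rewrite Heq piz1 /Xact /Xe => e'.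
    have : lcoset (b K) (Gam K.+1) (b K) by apply/lcosetP; rewrite mulVg; exact: sg1 Hnorm _.
    by rewrite e'.
  rewrite HF // /fsign; case: asboolP => // hX; exfalso.
  move: hX; rewrite Heq piz1 => -[j j1]; rewrite /Xact /Xe => /(lcoset_eq Hnorm) hj.
  case: (ltngtP j K.+1) => hjK.
  - apply: (Hgam j j1).2; rewrite ltnS in hjK.
    have := sgM Hnorm (sgdec Hdec hjK hb1) hj; rewrite mulgA mulgV mul1g; exact.
  - apply: hb2.
    have hg : Gam K.+1 (gam j).
      apply: (@sgdec _ _ Hdec K.+1 j.-1); first by rewrite -ltnS prednK // (leq_trans _ hjK).
      exact: (Hgam j j1).1.
    have := sgM Hnorm (sgdec Hdec (ltnW hjK) hj) (sgV Hnorm hg).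
    rewrite -mulgA mulgV mulg1 => /(sgV Hnorm); rewrite invgK; exact.
  - subst j; apply: hb3; have := sgV Hnorm hj; rewrite invgM invgK; exact.
have [wp hwp] := cluster_seq (fun K => T (gam K.+1) z1) cY.
have [wm hwm] := cluster_seq (fun K => T (b K) z1) cY.
have piwp : pi wp = Xe Gam.
  apply: funext => k.
  have hA : \forall K \near \oo, pi (T (gam K.+1) z1) k = Gam k.
    by exists k => // K /= kK; exact: up_lev.
  have [y [e1 e2]] := hwp [set y | pi y k = Gam k] [set y | pi y k = pi wp k] hA (Hloc k wp).
  by rewrite -e2 e1.
have piwm : pi wm = Xe Gam.
  apply: funext => k.
  have hA : \forall K \near \oo, pi (T (b K) z1) k = Gam k.
    by exists k => // K /= kK; exact: dn_lev.
  have [y [e1 e2]] := hwm [set y | pi y k = Gam k] [set y | pi y k = pi wm k] hA (Hloc k wm).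
  by rewrite -e2 e1.
have Fwp : F wp = 1%R.
  apply: contrapT => ne.
  have e0 : (0 < `|1 - F wp|)%R by rewrite normr_gt0 subr_eq0 eq_sym; apply/eqP.
  have hA : \forall K \near \oo, F (T (gam K.+1) z1) = 1%R by exists 0%N => // K _; exact: up_F.
  have [y [e1 e2]] := hwp [set y | F y = 1%R] [set y | `|F wp - F y| < `|1 - F wp| ]%R hA
    (@cvgr_dist_lt _ _ _ _ _ F (F wp) (Fc wp) _ e0).
  by move: e2; rewrite /= e1 distrC ltxx.
have Fwm : F wm = (-1)%R.
  apply: contrapT => ne.
  have e0 : (0 < `|-1 - F wm|)%R by rewrite normr_gt0 subr_eq0 eq_sym; apply/eqP.
  have hA : \forall K \near \oo, F (T (b K) z1) = (-1)%R by exists 0%N => // K _; exact: dn_F.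
  have [y [e1 e2]] := hwm [set y | F y = (-1)%R] [set y | `|F wm - F y| < `|-1 - F wm| ]%R hA
    (@cvgr_dist_lt _ _ _ _ _ F (F wm) (Fc wm) _ e0).
  by move: e2; rewrite /= e1 distrC ltxx.
have wpm : wp <> wm.
  by move=> e; have h := Fwp; rewrite e Fwm in h; exact: m1n1 h.
have FibE y : pi y = Xe Gam -> y = wp \/ y = wm.
  move=> /fibE hy; have /fibE hp := piwp; have /fibE hm := piwm.
  case: hy => ey; case: hp => ep; case: hm => em;
    first [by left; congruence|by right; congruence|by exfalso; apply: wpm; congruence].
have Fpm y : F y = 1%R \/ F y = (-1)%R.
  case: (pselect (pi y = Xe Gam)) => h.
    by case: (FibE y h) => ->; [left|right].
  by rewrite HF //; exact: fsign_pm.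
have sepE y y' : pi y = Xe Gam -> pi y' = Xe Gam -> F y = F y' -> y = y'.
  move=> /FibE [] -> /FibE [] -> //; rewrite ?Fwp ?Fwm => h; exfalso;
    first [exact: (@m1n1 R) h | exact: (@m1n1 R) (esym h)].
have sep y y' : y <> y' -> (exists k, pi y k <> pi y' k) \/ (exists h, F (T h y) <> F (T h y')).
  move=> ne; case: (pselect (pi y = pi y')) => e; last first.
    left; apply: contrapT => hn; apply: e; apply: funext => k; apply: contrapT => hk.
    by apply: hn; exists k.
  right; case: (pselect (exists g, pi y = Xact g (Xe Gam))) => [[g hg]|ng].
    exists g^-1%g => hF; apply: ne; apply: (Tinj g^-1%g); apply: sepE => //.
      by rewrite Heq hg Xact_comp mulVg Xact1.
    by rewrite Heq -e hg Xact_comp mulVg Xact1.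
  have [y0 hy0] := Hfib1 (pi y) (Hxp y) ng.
  have h1 : y = y0 by have := congr1 (fun A => A y) hy0 => /= <-.
  have h2 : y' = y0 by have := congr1 (fun A => A y') hy0 => /= <-.
  by exfalso; apply: ne; rewrite h1 h2.
pose agree (d : (nat + G)%type) (y y' : Y) : Prop :=
  match d with inl k => pi y k = pi y' k | inr h => F (T h y) = F (T h y') end.
have ar d y : agree d y y by case: d.
have asy d y y' : agree d y y' -> agree d y' y by case: d => /= ? ->.
have atr d y y' y'' : agree d y y' -> agree d y' y'' -> agree d y y'' by case: d => /= ? -> ->.
have aloc d y : \forall w \near y, agree d y w.
  case: d => [k|h] /=.
    by apply: filterS (Hloc k y) => w; exact: esym.
  have hB : \forall t \near T h y, (`|F (T h y) - F t| < 1)%R.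
    by apply: (@cvgr_dist_lt _ _ _ _ _ F (F (T h y)) (Fc (T h y)) _ ltr01).
  near=> w; apply: pm_close (Fpm _) (Fpm _) _.
  by near: w; exact: (Tc h y _ hB).
have asep y y' : y <> y' -> exists d, ~ agree d y y'.
  by move=> /sep [[k hk]|[h hh]]; [exists (inl k)|exists (inr h)].
move=> s U Uo Uc.
have [D hD] := stage2 ar asy atr aloc asep z1 cY Uo Uc.
pose m := (\max_(d <- D) (if d is inl k then k else 0))%N.
pose H := pmap (fun d : (nat + G)%type => if d is inr h then Some h else None) D.
have PU y : exists2 j, (j < size U)%N & forall y', pi y m = pi y' m ->
    (forall h, h \in H -> F (T h y) = F (T h y')) -> nth set0 U j y'.
  have [j jU hj] := hD y; exists j => // y' hm hh; apply: hj => d; case: d => [k|h] dD /=.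
    apply: (level_down Hnorm Hdec (Hxp y) (Hxp y') hm).
    exact: (@leq_bigmax_seq _ D xpredT (fun d : (nat + G)%type => if d is inl k then k else 0%N) (inl k)).
  by apply: hh; rewrite mem_pmap; apply/mapP; exists (inr h).
have [rs hrs] := (Hsub m).2.
pose C := size rs.
apply: (@null_from_poly R _ (3 * C.+1 * (size H + 2) ^ 3)) => n.
pose S := [seq (h * s i)%g | h <- H, i <- iota 1 n].
pose N := size S.
pose Kt := ('I_3 * 'I_C.+1 * 'I_N.+2 * 'I_N.+2 * 'I_N.+2)%type.
pose cos (y : Y) (c : 'I_C.+1) := exists2 r, r \in rs &
  c = inord (index r rs) /\ pi y m = lcoset r (Gam m).
pose caseA (y : Y) (i u : 'I_N.+2) := exists g, [/\ g \in S, pi (T g y) = Xe Gam,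
  i = inord (index g S) & u = inord (T g y == wp)].
pose nE (y : Y) := forall g, g \in S -> pi (T g y) <> Xe Gam.
pose caseB (y : Y) := nE y /\ forall g, g \in S -> ~ Xplus Gam gam (pi (T g y)).
pose caseC (y : Y) (i u v : 'I_N.+2) := nE y /\ exists a g0 K,
  [/\ (forall k, pi y k = lcoset (a k) (Gam k)) /\ nested Gam a, g0 \in S,
      Wit Gam gam g0 a K /\ (forall g j, g \in S -> Wit Gam gam g a j -> (j <= K)%N),
      i = inord (index g0 S) &
      u = inord (count (fun g => `[< PatA Gam g0 K g >]) S) /\
      v = inord (count (fun g => `[< PatB Gam gam g0 K g >]) S)].
pose Rel (y : Y) (k : Kt) := let: (t, c, i, u, v) := k in cos y c /\
  [\/ (nat_of_ord t = 0%N /\ caseA y i u), (nat_of_ord t = 1%N /\ caseB y) | (nat_of_ord t = 2%N /\ caseC y i u v)].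
pose same_n (y0 y : Y) := pi y0 m = pi y m /\ forall g, g \in S -> F (T g y0) = F (T g y).
have tot y : exists k, Rel y k.
  have [a [ha na]] := Xpoint_rep Hnorm Hdec (Hxp y).
  have [r rin hr] := hrs (a m).
  have cy : cos y (inord (index r rs)).
    exists r => //; split => //; rewrite ha; apply/(lcoset_eq Hnorm).
    by have := sgV Hnorm hr; rewrite invgM invgK.
  case: (pselect (exists g, g \in S /\ pi (T g y) = Xe Gam)) => [[g [gS hg]]|nA].
    exists (inord 0, inord (index r rs), inord (index g S), inord (T g y == wp), inord 0).
    split => //; constructor 1; split; first by rewrite inordK.
    by exists g.
  have ne : nE y by move=> g gS e; apply: nA; exists g.
  case: (pselect (exists g, g \in S /\ exists j, Wit Gam gam g a j)) => [hw|nw].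
    have [g0 [K [g0S w0 mx]]] := wit_max Hnorm Hdec Hgam na hw.
    exists (inord 2, inord (index r rs), inord (index g0 S),
      inord (count (fun g => `[< PatA Gam g0 K g >]) S),
      inord (count (fun g => `[< PatB Gam gam g0 K g >]) S)).
    split => //; constructor 3; split; first by rewrite inordK.
    by split => //; exists a, g0, K.
  exists (inord 1, inord (index r rs), inord 0, inord 0, inord 0).
  split => //; constructor 2; split; first by rewrite inordK.
  split => // g gS; rewrite Heq => /(Xplus_Xact gam Hnorm g ha) hx.
  by apply: nw; exists g.
have Fval y g : nE y -> g \in S -> forall a, (forall k, pi y k = lcoset (a k) (Gam k)) ->
    F (T g y) = if `[< exists j, Wit Gam gam g a j >] then 1%R else (-1)%R.
  move=> ny gS a ha; rewrite HF; last exact: ny.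
  rewrite /fsign Heq; case: asboolP => h1; case: asboolP => h2 //.
    by exfalso; apply: h2; apply/(Xplus_Xact gam Hnorm g ha).
  by exfalso; apply: h1; apply/(Xplus_Xact gam Hnorm g ha).
have SN : (size S <= N.+1)%N by rewrite leqnSn.
have uniqR y y' k : Rel y k -> Rel y' k -> same_n y y'.
  case: k => [[[[t c] i] u] v] /= [cy hy] [cy' hy'].
  have em : pi y m = pi y' m.
    case: cy => r rin [ec er]; case: cy' => r' rin' [ec' er'].
    have rr : r = r' by apply: (@index_inord_inj _ rs C _ _ rin rin' (leqnn C)); rewrite -ec -ec'.
    by rewrite er er' rr.
  case: hy => [[t0 hA]|[t1 hB]|[t2 hC]]; case: hy' => [[t0' hA']|[t1' hB']|[t2' hC']];
    try by (exfalso; congruence).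
  - case: hA => g [gS hg ei eu]; case: hA' => g' [gS' hg' ei' eu'].
    have gg : g = g' by apply: (@index_inord_inj _ S N.+1 _ _ gS gS' SN); rewrite -ei -ei'.
    subst g'.
    have eb : (T g y == wp) = (T g y' == wp) by apply: (@inord_bool_inj N); rewrite -eu -eu'.
    have yy : T g y = T g y'.
      case: (FibE _ hg) eb => ->; case: (FibE _ hg') => -> //.
        by rewrite eqxx => /esym/eqP h; exfalso; apply: wpm.
      by rewrite eqxx => /eqP h; exfalso; apply: wpm.
    by have := Tinj g _ _ yy => <-.
  - split => // g gS; case: hB => ny ny'; case: hB' => nz nz'.
    rewrite (HF _ (ny g gS)) (HF _ (nz g gS)) /fsign.
    case: asboolP => h1; first by exfalso; exact: ny' g gS h1.
    by case: asboolP => h2 //; exfalso; exact: nz' g gS h2.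
  - case: hC => ny [a [g0 [K [[ha na] g0S [w0 mx] ei [eu ev]]]]].
    case: hC' => nz [a' [g0' [K' [[ha' na'] g0S' [w0' mx'] ei' [eu' ev']]]]].
    have gg : g0 = g0' by apply: (@index_inord_inj _ S N.+1 _ _ g0S g0S' SN); rewrite -ei -ei'.
    subst g0'.
    have cle : forall p : pred G, (count p S <= N.+1)%N by move=> p; exact: leq_trans (count_size _ _) SN.
    have cA := @inord_inj_le N.+1 _ _ (cle _) (cle _) (etrans (esym eu) eu').
    have cB := @inord_inj_le N.+1 _ _ (cle _) (cle _) (etrans (esym ev) ev').
    split => // g gS.
    rewrite (Fval y g ny gS a ha) (Fval y' g nz gS a' ha').
    have := key_pattern Hnorm Hdec Hgam na na' w0 w0' mx mx' cA cB gS.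
    by case: asboolP => h1; case: asboolP => h2 // [h3 h4]; exfalso;
      [apply: h2; apply: h3|apply: h1; apply: h4].
have [ys [sz cov]] := @reps_exist Y Kt Rel same_n tot uniqR.
have hNc : (Ncover (join_pullbacks T s U n) <= size ys)%N.
  apply: (@Ncover_le Y ys same_n _ cov) => y0; rewrite /join_pullbacks; apply: foldr_join_sub => i iin.
  have [j jU hj] := PU (T (s i) y0).
  exists j => // y [e1 e2] /=; apply: hj.
    by rewrite !Heq /Xact e1.
  move=> h hH; rewrite -!TM; apply: e2; exact: allpairs_f.
apply: leq_trans hNc _; apply: leq_trans sz _.
rewrite !card_prod !card_ord.
have hN : (N = size H * n)%N by rewrite /N /S size_allpairs size_iota.
rewrite hN.
have hX : (size H * n).+2 <= (size H + 2) * n.+1 by nia.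
set X := (size H * n).+2.
have hX3 : (X * X * X <= (size H + 2) ^ 3 * n.+1 ^ 3)%N.
  rewrite -expnMn expnS expnS expn1 mulnA.
  by apply: leq_mul => //; apply: leq_mul.
have e1 : (3 * C.+1 * X * X * X = 3 * C.+1 * (X * X * X))%N by rewrite !mulnA.
have e2 : (3 * C.+1 * (size H + 2) ^ 3 * n.+1 ^ 3 = 3 * C.+1 * ((size H + 2) ^ 3 * n.+1 ^ 3))%N
  by rewrite !mulnA.
by rewrite e1 e2 leq_mul2l hX3 orbT.
Unshelve. all: by end_near.
Qed.
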